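(* For every integer $n>0$, the Hochschild lattice $\mathrm{Hoch}(n)$ has order dimension $n$.
   Context: For a finite directed graph $G$ without multiple edges, a maximal orthogonal pair is a pair $(X,Y)$ of disjoint subsets of the vertex set with no edge from a vertex of $X$ to a vertex of $Y$, maximal (under componentwise inclusion) for this property; these pairs ordered by $(X,Y)\le(X',Y')$ iff $X\subseteq X'$ form a lattice $L(G)$. $\mathrm{Hoch}(n):=L(G_n)$, where $G_n$ has vertices $\{(i,j)\mid i\in\{1,2\},\ i\le j\le n\}$ and edges $(i,j)\to(i',j')$ for $(i,j)\ne(i',j')$ whenever either $i=2$, $i'=1$, $j=j'$, or $i=i'=1$ and $j>j'$ (equivalently, $\mathrm{Hoch}(n)$ is the extremal lattice whose Galois graph is $G_n$). The order dimension of a poset $P$ is the least $d$ such that $P$ embeds as a subposet of $\mathbb R^d$ with the componentwise order. *)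

(* Defs.v *)
From Stdlib Require Import Reals.
From mathcomp Require Import all_boot.
Set Implicit Arguments. Unset Strict Implicit. Unset Printing Implicit Defensive.

Section Galois.
Variables (V : finType) (e : rel V).

Definition orth_pair (p : {set V} * {set V}) : bool :=
  [disjoint p.1 & p.2] && [forall x in p.1, forall y in p.2, ~~ e x y].

Definition max_orth_pair (p : {set V} * {set V}) : bool :=
  orth_pair p &&
  [forall q : {set V} * {set V},
     [&& orth_pair q, p.1 \subset q.1 & p.2 \subset q.2] ==> (q == p)].

Definition Lcarrier : Type := {p : {set V} * {set V} | max_orth_pair p}.

Definition Lle (p q : Lcarrier) : bool := (val p).1 \subset (val q).1.
End Galois.

(* vertices (i,j) with i in {1,2}, i <= j <= n; encoded in 'I_3 * 'I_n.+1 *)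
Definition Gvert (n : nat) : Type :=
  {v : 'I_3 * 'I_n.+1 | (0 < v.1) && (v.1 <= v.2)}.

Definition Gedge (n : nat) : rel (Gvert n) := fun u v =>
  let i := nat_of_ord (val u).1 in let j := nat_of_ord (val u).2 in
  let i' := nat_of_ord (val v).1 in let j' := nat_of_ord (val v).2 in
  [&& i == 2, i' == 1 & j == j'] || [&& i == 1, i' == 1 & j' < j].

Definition Hoch (n : nat) : Type := Lcarrier (@Gedge n).
Definition Hoch_le (n : nat) : rel (Hoch n) := @Lle _ (@Gedge n).

Definition embeds_in_Rd (T : Type) (le : rel T) (d : nat) : Prop :=
  exists f : T -> 'I_d -> R,
    (forall x y, f x = f y -> x = y) /\
    (forall x y, le x y <-> (forall k : 'I_d, Rle (f x k) (f y k))).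

Definition order_dimension (T : Type) (le : rel T) (d : nat) : Prop :=
  embeds_in_Rd le d /\ (forall d', embeds_in_Rd le d' -> d <= d').

(* Main.v *)
Require Import Defs.
From Stdlib Require Import Reals Lra.
From mathcomp Require Import all_boot.
From mathcomp Require Import zify.
Set Implicit Arguments. Unset Strict Implicit. Unset Printing Implicit Defensive.

Section Gen.
Variables (V : finType) (e : rel V).

Lemma disjP' (A B : {set V}) : (forall x, x \in A -> x \in B -> False) -> [disjoint A & B].
Proof. move=> H; apply/pred0P => x /=; apply/negP => /andP [a b]; exact: H a b. Qed.

Lemma orth_noedge (p : {set V} * {set V}) x y :
  orth_pair e p -> x \in p.1 -> y \in p.2 -> ~~ e x y.
Proof. by case/andP=> _ /forall_inP H /H /forall_inP H2 /H2. Qed.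

Lemma orth_disj (p : {set V} * {set V}) x :
  orth_pair e p -> x \in p.1 -> x \in p.2 -> False.
Proof. by case/andP=> /disjointFr H _ /H ->. Qed.

Lemma max_crit (p : {set V} * {set V}) :
  orth_pair e p ->
  (forall v, v \notin p.1 -> v \notin p.2 ->
     (exists2 x, x \in p.1 & e x v) /\ (exists2 y, y \in p.2 & e v y)) ->
  max_orth_pair e p.
Proof.
case: p => P1 P2 /= Hp Hn; rewrite /max_orth_pair Hp /=.
apply/forallP => -[X Y] /=; apply/implyP => /and3P [Hq s1 s2].
have XP : X \subset P1.
  apply/subsetP => v vX; case: (boolP (v \in P1)) => // vP1.
  case: (boolP (v \in P2)) => vP2.
    by case: (orth_disj Hq vX (subsetP s2 _ vP2)).
  have [_ [y yP2 evy]] := Hn v vP1 vP2.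
  by move: (orth_noedge Hq vX (subsetP s2 _ yP2)); rewrite evy.
have YP : Y \subset P2.
  apply/subsetP => v vY; case: (boolP (v \in P2)) => // vP2.
  case: (boolP (v \in P1)) => vP1.
    by case: (orth_disj Hq (subsetP s1 _ vP1) vY).
  have [[x xP1 exv] _] := Hn v vP1 vP2.
  by move: (orth_noedge Hq (subsetP s1 _ xP1) vY); rewrite exv.
have -> : X = P1 by apply/eqP; rewrite eqEsubset XP s1.
have -> : Y = P2 by apply/eqP; rewrite eqEsubset YP s2.
by [].
Qed.

Lemma max_orth (p : {set V} * {set V}) : max_orth_pair e p -> orth_pair e p.
Proof. by case/andP. Qed.

Lemma max_out (p : {set V} * {set V}) v :
  max_orth_pair e p -> v \notin p.1 -> v \notin p.2 ->
  exists2 y, y \in p.2 & e v y.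
Proof.
case: p => P1 P2 /= /andP [Hp /forallP Hm] vP1 vP2.
case: (boolP [exists y in P2, e v y]) => [/exists_inP [y ? ?]|Hno]; first by exists y.
have Hq : orth_pair e (v |: P1, P2).
  apply/andP; split => /=.
    apply: disjP' => x; rewrite in_setU1 => /orP [/eqP ->|xP1] xP2; first by rewrite xP2 in vP2.
    exact: (orth_disj Hp xP1 xP2).
  apply/forall_inP => x; rewrite in_setU1 => /orP [/eqP ->|xP1].
    apply/forall_inP => y yP2; apply/negP => evy.
    by move/negP: Hno; apply; apply/exists_inP; exists y.
  by apply/forall_inP => y; apply: (orth_noedge Hp xP1).
move: (Hm (v |: P1, P2)); rewrite Hq /= subsetUr subxx /= => /eqP [] E.
by move: vP1; rewrite -E setU11.
Qed.

Lemma max_inj (p q : {set V} * {set V}) :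
  max_orth_pair e p -> max_orth_pair e q -> p.1 = q.1 -> p = q.
Proof.
case: p => P1 P2; case: q => Q1 Q2 /= Hp Hq E; subst Q1.
have Hu : orth_pair e (P1, P2 :|: Q2).
  apply/andP; split => /=.
    apply: disjP' => x xP1; rewrite in_setU => /orP [xP|xQ].
      exact: (orth_disj (max_orth Hp) xP1 xP).
    exact: (orth_disj (max_orth Hq) xP1 xQ).
  apply/forall_inP => x xP1; apply/forall_inP => y; rewrite in_setU => /orP [yP|yQ].
    exact: (orth_noedge (max_orth Hp) xP1 yP).
  exact: (orth_noedge (max_orth Hq) xP1 yQ).
move: Hp => /andP [_ /forallP /(_ (P1, P2 :|: Q2))]; rewrite Hu /= subxx subsetUl /= => /eqP [] E1.
move: Hq => /andP [_ /forallP /(_ (P1, P2 :|: Q2))]; rewrite Hu /= subxx subsetUr /= => /eqP [] E2.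
by rewrite -E1 E2.
Qed.
End Gen.

Section Hn.
Variable n : nat.
Implicit Types v w : Gvert n.

Definition vi v : nat := nat_of_ord (val v).1.
Definition vj v : nat := nat_of_ord (val v).2.

Lemma vprop v : [/\ 0 < vi v, vi v <= vj v, vi v < 3 & vj v <= n].
Proof.
case: v => [[i j] H]; rewrite /vi /vj /=; case/andP: H => H1 H2; split => //.
  all: try exact: ltn_ord.
  all: by rewrite -ltnS ltn_ord.
Qed.

Lemma vi12 v : (vi v = 1) \/ (vi v = 2).
Proof. case: (vprop v) => H1 H2 H3 H4; lia. Qed.

Lemma veq v w : vi v = vi w -> vj v = vj w -> v = w.
Proof.
move=> Hi Hj; apply: val_inj; move: Hi Hj; rewrite /vi /vj.
case: (val v) => a b; case: (val w) => c d /= H1 H2.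
by rewrite (ord_inj H1) (ord_inj H2).
Qed.

Lemma mkv i j : 0 < i -> i <= j -> i < 3 -> j <= n -> exists v : Gvert n, vi v = i /\ vj v = j.
Proof.
move=> H1 H2 H3 H4.
have Hj : j < n.+1 by lia.
have P : (0 < (Ordinal H3 : 'I_3)) && ((Ordinal H3 : 'I_3) <= (Ordinal Hj : 'I_n.+1)) by rewrite /= H1 H2.
by exists (exist _ (Ordinal H3, Ordinal Hj) P).
Qed.

Lemma edgeE v w : Gedge v w = [&& vi v == 2, vi w == 1 & vj v == vj w] || [&& vi v == 1, vi w == 1 & vj w < vj v].
Proof. by []. Qed.

Definition Xs c (B : nat -> bool) : {set Gvert n} :=
  [set v | ((vi v == 1) && (vj v < c)) || ((vi v == 2) && B (vj v))].
Definition Ys c (B : nat -> bool) : {set Gvert n} :=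
  [set v | ((vi v == 1) && ((vj v == c) || ((c < vj v) && ~~ B (vj v)))) || ((vi v == 2) && ~~ B (vj v))].

Lemma mk_max c B : 0 < c -> ~~ B c -> max_orth_pair (@Gedge n) (Xs c B, Ys c B).
Proof.
move=> Hc HB; apply: max_crit => /=.
  apply/andP; split.
    apply: disjP' => v; rewrite !inE; case: (B (vj v)) => /=; lia.
  apply/forall_inP => v; rewrite inE => Hv; apply/forall_inP => w; rewrite inE => Hw.
  rewrite edgeE; apply/negP => He.
  case/orP: He => /and3P [/eqP e1 /eqP e2 e3].
    move/eqP: e3 => e3; rewrite -e3 in Hw.
    case: (boolP (B (vj v))) => hb; rewrite hb /= in Hv Hw.
      have ec : vj v = c by lia.
      by rewrite -ec hb in HB.
    lia.
  move: Hv Hw; case: (B (vj v)); case: (B (vj w)) => /= Hv Hw; lia.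
move=> v; rewrite !inE => Hx Hy.
have [Hi|Hi] := vi12 v; last first.
  by move: Hx Hy; rewrite Hi /=; case: (B (vj v)).
move: Hx Hy; rewrite Hi /= => Hx Hy.
have Hcj : c < vj v by lia.
have HBj : B (vj v) by move: Hy; case: (B (vj v)) => //=; rewrite Hcj orbT.
case: (vprop v) => _ _ _ Hjn.
split.
  have [w [w1 w2]] := mkv (i:=2) (j:=vj v) isT (leq_ltn_trans Hc Hcj) isT Hjn.
  exists w; first by rewrite inE w1 w2 HBj orbT.
  by rewrite edgeE w1 w2 Hi !eqxx.
have [w [w1 w2]] := mkv (i:=1) (j:=c) isT Hc isT (ltnW (leq_trans Hcj Hjn)).
exists w; first by rewrite /= inE w1 w2 /=; apply/orP; left; apply/orP; left; apply/eqP.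
by rewrite edgeE w1 w2 Hi Hcj eqxx orbT.
Qed.

End Hn.

Section Emb.
Variable n : nat.

Lemma prefix (p : {set Gvert n} * {set Gvert n}) v w :
  max_orth_pair (@Gedge n) p -> v \in p.1 -> vi v = 1 -> vi w = 1 -> vj w < vj v -> w \in p.1.
Proof.
move=> Hm vX iv iw jwv; case: (boolP (w \in p.1)) => // wX.
case: (boolP (w \in p.2)) => wY.
  by have := orth_noedge (max_orth Hm) vX wY; rewrite edgeE iv iw jwv eqxx orbT.
have [y yY] := max_out Hm wX wY.
rewrite edgeE iw => /orP [/and3P [] //| /and3P [_ iy jy]].
have := orth_noedge (max_orth Hm) vX yY.
by rewrite edgeE iv (eqP iy) eqxx (ltn_trans jy jwv) orbT.
Qed.

Definition fA (p : Hoch n) : {set Gvert n} := [set v in (val p).1 | vi v == 1].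
Definition femb (p : Hoch n) (k : 'I_n) : R :=
  if nat_of_ord k == 0 then INR #|fA p|
  else if [exists v in (val p).1, (vi v == 2) && (vj v == k.+1)] then R1 else R0.

Lemma Lle_iff (p q : Hoch n) : Hoch_le p q <-> (forall k, Rle (femb p k) (femb q k)).
Proof.
split.
  move=> /subsetP sub k; rewrite /femb; case: eqP => _.
    apply: le_INR; apply/leP; apply: subset_leq_card; apply/subsetP => v.
    by rewrite !inE => /andP [a b]; rewrite sub.
  case: (boolP [exists v in (val p).1, _]) => [/exists_inP [v vX Hv]|_].
    rewrite (_ : [exists v in (val q).1, _] = true); first exact: Rle_refl.
    by apply/exists_inP; exists v => //; apply: sub.
  case: ifP => _; lra.
move=> H; apply/subsetP => v vX.
case: (vprop v) => v1 v2 v3 v4.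
have [iv|iv] := vi12 v.
  apply/negPn/negP => vnq.
  pose S := [set w : Gvert n | (vi w == 1) && (vj w < vj v)].
  have s1 : fA q \subset S.
    apply/subsetP => w; rewrite !inE => /andP [wX /eqP iw]; rewrite iw eqxx /=.
    case: (ltngtP (vj w) (vj v)) => // h.
      by move: vnq; rewrite (prefix (valP q) wX iw iv h).
    by move: vnq; rewrite (veq (esym (etrans iw (esym iv))) (esym h)) wX.
  have s2 : v |: S \subset fA p.
    apply/subsetP => w; rewrite !inE => /orP [/eqP ->|/andP [/eqP iw h]].
      by rewrite vX iv.
    by rewrite iw eqxx (prefix (valP p) vX iv iw h).
  have vS : v \notin S by rewrite inE ltnn andbF.
  have c1 := subset_leq_card s1; have c2 := subset_leq_card s2.
  rewrite cardsU1 vS add1n in c2.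
  have n0 : 0 < n by lia.
  have := H (Ordinal n0); rewrite /femb /= => /INR_le /leP h.
  by have := leq_trans c2 (leq_trans h c1); rewrite ltnn.
have n0 : (vj v).-1 < n by lia.
have := H (Ordinal n0); rewrite /femb /=.
have -> : ((vj v).-1 == 0) = false by lia.
have -> : (vj v).-1.+1 = vj v by lia.
rewrite (_ : [exists w in (val p).1, _] = true); last first.
  by apply/exists_inP; exists v => //; rewrite iv !eqxx.
case: ifP => [/exists_inP [w wX /andP [/eqP iw /eqP jw]] _|_ h]; last lra.
by rewrite (veq (etrans iv (esym iw)) (esym jw)).
Qed.

Lemma femb_inj (p q : Hoch n) : femb p = femb q -> p = q.
Proof.
move=> E.
have h1 : Hoch_le p q by apply/Lle_iff => k; rewrite E; apply: Rle_refl.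
have h2 : Hoch_le q p by apply/Lle_iff => k; rewrite E; apply: Rle_refl.
apply: val_inj; apply: max_inj (valP p) (valP q) _.
by apply/eqP; rewrite eqEsubset; apply/andP; split; [exact: h1|exact: h2].
Qed.

End Emb.

Section Low.
Variable n : nat.

Definition mkH c (B : nat -> bool) (Hc : 0 < c) (HB : ~~ B c) : Hoch n :=
  exist _ (Xs n c B, Ys n c B) (@mk_max n c B Hc HB).

Lemma mkH_le c (B : nat -> bool) c' (B' : nat -> bool) Hc HB Hc' HB' :
  c <= c' -> (forall j, B j -> B' j) -> Hoch_le (@mkH c B Hc HB) (@mkH c' B' Hc' HB').
Proof.
move=> hc hB; rewrite /Hoch_le /Lle /=; apply/subsetP => v; rewrite !inE.
case/orP => /andP [a b]; apply/orP; [left|right]; rewrite a /=; [lia|exact: hB].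
Qed.

Lemma mkH_nle c (B : nat -> bool) c' (B' : nat -> bool) Hc HB Hc' HB' v :
  v \in Xs n c B -> v \notin Xs n c' B' -> ~ Hoch_le (@mkH c B Hc HB) (@mkH c' B' Hc' HB').
Proof. by move=> h1 h2 /subsetP /(_ v h1); rewrite (negbTE h2). Qed.

Lemma Pk_ok (i : nat) : ~~ ((fun j => (j == i.+1) && (1 < j)) 1).
Proof. by rewrite /= andbF. Qed.
Lemma Qk_ok (i : nat) : ~~ ((fun j => (j <= n) && (j != i.+1)) n.+1).
Proof. by rewrite /= ltnn. Qed.

Definition P0 := @mkH n.+1 (fun _ => false) isT isT.
Definition Pk (i : nat) := @mkH 1 (fun j => (j == i.+1) && (1 < j)) isT (Pk_ok i).
Definition Q0 := @mkH 1 (fun j => 1 < j) isT isT.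
Definition Qk (i : nat) := @mkH n.+1 (fun j => (j <= n) && (j != i.+1)) isT (Qk_ok i).
Definition Pf (i : 'I_n) := if nat_of_ord i == 0 then P0 else Pk i.
Definition Qf (i : 'I_n) := if nat_of_ord i == 0 then Q0 else Qk i.

Lemma PQ_nle (n0 : 0 < n) i : ~ Hoch_le (Pf i) (Qf i).
Proof.
rewrite /Pf /Qf; case: eqP => i0.
  have [v [v1 v2]] := mkv (n:=n) (i:=1) (j:=n) isT n0 isT (leqnn n).
  apply: (mkH_nle (v := v)); rewrite !inE v1 v2 /=; lia.
have ii : 2 <= i.+1 by lia.
have [v [v1 v2]] := mkv (n:=n) (i:=2) (j:=i.+1) isT ii isT (ltn_ord i).
apply: (mkH_nle (v := v)); rewrite !inE v1 v2 /= ?eqxx /=; lia.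
Qed.

Lemma PQ_le (j i : 'I_n) : j != i -> Hoch_le (Pf j) (Qf i).
Proof.
move=> /eqP ne; have ne' : nat_of_ord j <> nat_of_ord i by move=> h; apply: ne; apply: ord_inj.
have jn := ltn_ord j.
rewrite /Pf /Qf; case: eqP => j0; case: eqP => i0; try lia.
all: apply: mkH_le => /=; try lia.
all: move=> l; lia.
Qed.

End Low.

Theorem proposition4p3 (n : nat) : 0 < n -> order_dimension (@Hoch_le n) n.
Proof.
move=> n0; split.
  exists (@femb n); split; [move=> x y; exact: femb_inj | move=> x y; exact: Lle_iff].
move=> d [f [finj fle]].
have ex i : exists k : 'I_d, (if Rlt_dec (f (Qf i) k) (f (Pf i) k) then true else false).
  case: (boolP [exists k, (if Rlt_dec (f (Qf i) k) (f (Pf i) k) then true else false)]).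
    by move/existsP.
  move=> /existsPn hn; exfalso; apply: (PQ_nle n0 (i := i)); apply/fle => k.
  move: (hn k); case: Rlt_dec => // h _; exact: Rnot_lt_le.
pose g i := xchoose (ex i).
have gP i : (if Rlt_dec (f (Qf i) (g i)) (f (Pf i) (g i)) then true else false) := xchooseP (ex i).
have ginj : injective g.
  move=> i j E; case: (eqVneq i j) => // ne; exfalso.
  have hi := gP i; have hj := gP j; rewrite E in hi.
  move: hi hj; case: Rlt_dec => // hi _; case: Rlt_dec => // hj _.
  have nji : j != i by rewrite eq_sym.
  have h1 := (fle (Pf j) (Qf i)).1 (PQ_le nji) (g j).
  have h2 := (fle (Pf i) (Qf j)).1 (PQ_le ne) (g j).
  lra.
by have := leq_card g ginj; rewrite !card_ord.
Qed.
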